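(* Let $a\in\mathbb{N}$ and $b,d\in\mathbb{Z}$ with $b>d$, $\gcd(a,b-d)=1$ and $a\mid bd$. Then there exist $A,B\in\mathbb{N}$ with $B\ge 2$ and $A=B(B-1)$ such that $R_{a,b,a,d}\supseteq R_{A,B,A,B-1}$; in particular $\omega(G_{a,b,a,d})\ge\omega(G_{A,B,A,B-1})$. Moreover, there exist $C,D\in\mathbb{N}$ such that for every integer $m\ge 1$, setting $n=Cm+D$, $$\frac{an+b}{an+d}=\frac{Am+B}{Am+(B-1)}.$$
   Context: $\mathbb{N}=\{1,2,\dots\}$. For $a,c\in\mathbb{N}$, $b,d\in\mathbb{Z}$, $R_{a,b,c,d} := \left\{ \frac{an+b}{cn+d} : n \in \mathbb{N} \right\} \cap (\mathbb{Q}_{>0}\setminus\{1\})$; $G_{a,b,c,d}$ is the graph with vertex set $\mathbb{N}$ and edge set $\{\{m,n\}: m/n\in R_{a,b,c,d}\}$. $\omega$ denotes clique number. *)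

(* Defs.v *)
From mathcomp Require Import all_boot all_order all_algebra.
Set Implicit Arguments.
Unset Strict Implicit.
Unset Printing Implicit Defensive.
Import Order.TTheory GRing.Theory Num.Theory.
Local Open Scope ring_scope.

(* When c n + d = 0, MathComp's division yields 0, which is excluded by
   the positivity condition, so undefined fractions never enter the set. *)
Definition Rset (a : nat) (b : int) (c : nat) (d : int) (q : rat) : Prop :=
  (exists n : nat, (1 <= n)%N /\
     q = ((a%:R * n%:R + b%:~R) / (c%:R * n%:R + d%:~R) : rat))
  /\ 0 < q /\ q != 1.

Definition Gadj (a : nat) (b : int) (c : nat) (d : int) (m n : nat) : Prop :=
  (1 <= m)%N /\ (1 <= n)%N /\
  (Rset a b c d (m%:R / n%:R) \/ Rset a b c d (n%:R / m%:R)).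

Definition has_clique (a : nat) (b : int) (c : nat) (d : int) (k : nat) : Prop :=
  exists s : seq nat, [/\ uniq s, size s = k, all (fun x => 0 < x)%N s &
    forall x y, x \in s -> y \in s -> x != y -> Gadj a b c d x y].

(* omega(G_{a1,b1,c1,d1}) >= omega(G_{a2,b2,c2,d2}), clique numbers taken
   in N ∪ {∞} as the supremum of sizes of finite cliques: every clique size
   realised in the second graph is realised in the first. *)
Definition omega_ge (a1 : nat) (b1 : int) (c1 : nat) (d1 : int)
    (a2 : nat) (b2 : int) (c2 : nat) (d2 : int) : Prop :=
  forall k : nat, has_clique a2 b2 c2 d2 k -> has_clique a1 b1 c1 d1 k.

(* Main.v *)
Require Import Defs.
From mathcomp Require Import all_boot all_order all_algebra.
From mathcomp Require Import zify ring.
Import Order.TTheory GRing.Theory Num.Theory.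
Local Open Scope ring_scope.

Lemma key (a : nat) (b d : int) :
  (1 <= a)%N -> d < b -> coprimez a%:Z (b - d) -> (a%:Z %| b * d)%Z ->
  exists B1 D Q : int, [/\ 1 <= B1, 1 <= D, 1 <= Q,
     (b - d) * B1 = a%:Z * D + d & (B1 + 1) * B1 = Q * a%:Z].
Proof.
move=> a1 dlb cop /dvdzP [w Hw].
set e := b - d.
have [u [v Hb]] := Bezoutz a%:Z e.
have := cop; rewrite /coprimez => /eqP cop1; rewrite cop1 in Hb.
set k := `|u * d| + `|v * d| + 1.
have h1 := ler_norm (u * d). have h2 := ler_norm (v * d).
have h1' := ler_norm (- (u * d)). have h2' := ler_norm (- (v * d)).
rewrite normrN in h1' h2'.
have e1 : 1 <= e by rewrite /e; lia.
have a1' : 1 <= a%:Z by lia.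
have k1 : 1 <= k by rewrite /k; lia.
pose B1 := v * d + k * a%:Z.
pose D := e * k - u * d.
have k0 : 0 <= k by lia.
have ka := ler_peMr k0 a1'.
have ke := ler_peMl k0 e1.
have HB1 : 1 <= B1 by rewrite /B1; lia.
have HD : 1 <= D by rewrite /D; lia.
have HE : e * B1 = a%:Z * D + d.
  have : e * B1 - (a%:Z * D + d) = d * (u * a%:Z + v * e - 1)
    by rewrite /B1 /D; ring.
  by rewrite Hb subrr mulr0 => /eqP; rewrite subr_eq0 => /eqP.
have HEB : e * (B1 + 1) = a%:Z * D + b by rewrite mulrDr mulr1 HE /e; ring.
have dv : (a%:Z %| (B1 + 1) * B1)%Z.
  have : (a%:Z %| (B1 + 1) * B1 * e * e)%Z.
    apply/dvdzP; exists (a%:Z * D * D + D * (b + d) + w).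
    have -> : (B1 + 1) * B1 * e * e = (e * (B1 + 1)) * (e * B1) by ring.
    rewrite HEB HE.
    transitivity (a%:Z * (a%:Z * D * D + D * (b + d)) + b * d); first ring.
    rewrite Hw; ring.
  by rewrite (Gauss_dvdzl _ cop) (Gauss_dvdzl _ cop).
move/dvdzP: dv => [Q HQ].
exists B1, D, Q; split => //.
have : 0 < Q * a%:Z by rewrite -HQ mulr_gt0 //; lia.
rewrite pmulr_lgt0; last lia.
lia.
Qed.

Lemma natZ (x : int) : 0 <= x -> exists n : nat, x = n%:Z.
Proof. by move=> h; exists `|x|%N; rewrite gez0_abs. Qed.

Theorem lemma3p3 (a : nat) (b d : int) :
  (1 <= a)%N -> d < b -> coprimez a%:Z (b - d) -> (a%:Z %| b * d)%Z ->
  exists A B : nat,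
    [/\ (2 <= B)%N, A = (B * (B - 1))%N,
        (forall q : rat, Rset A B%:Z A (B%:Z - 1) q -> Rset a b a d q),
        omega_ge a b a d A B%:Z A (B%:Z - 1) &
        exists C D : nat, [/\ (1 <= C)%N, (1 <= D)%N &
          forall m : nat, (1 <= m)%N ->
            let n := (C * m + D)%N in
            ((a%:R * n%:R + b%:~R) / (a%:R * n%:R + d%:~R) : rat)
            = (A%:R * m%:R + B%:R) / (A%:R * m%:R + (B%:Z - 1)%:~R)]].
Proof.
move=> a1 dlb cop dv.
have [B1 [D [Q [hB1 hD hQ HE HQ]]]] := @key a b d a1 dlb cop dv.
have [b1 eb1] := @natZ _ (ltW (lt_le_trans ltr01 hB1)).
have [dn edn] := @natZ _ (ltW (lt_le_trans ltr01 hD)).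
have [qn eqn] := @natZ _ (ltW (lt_le_trans ltr01 hQ)).
have hbd : 0 <= b - d by rewrite subr_ge0 ltW.
have [en een] := @natZ _ hbd.
subst B1 D Q.
have en1 : (1 <= en)%N by move: dlb; rewrite -subr_gt0 -/(b - d) een; clear; lia.
have b11 : (1 <= b1)%N by move: hB1; clear; lia.
have dn1 : (1 <= dn)%N by move: hD; clear; lia.
have qn1 : (1 <= qn)%N by move: hQ; clear; lia.
rewrite een in HE.
have Hid : forall m : nat, let n := (en * qn * m + dn)%N in
   ((a%:R * n%:R + b%:~R) / (a%:R * n%:R + d%:~R) : rat)
   = ((b1.+1 * (b1.+1 - 1))%N%:R * m%:R + b1.+1%:R) /
     ((b1.+1 * (b1.+1 - 1))%N%:R * m%:R + (b1.+1%:Z - 1)%:~R).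
  move=> m n.
  have E1 : (a%:R * n%:R + b%:~R : rat) =
     en%:R * ((b1.+1 * (b1.+1 - 1))%N%:R * m%:R + b1.+1%:R).
    rewrite !pmulrn -!intrM -!intrD -!intrM; congr (_ %:~R).
    rewrite /n subn1 /= -addn1 !PoszD !PoszM.
    have -> : b = en%:Z + d by rewrite -een; ring.
    transitivity (en%:Z * m%:Z * (qn%:Z * a%:Z) + (a%:Z * dn%:Z + d) + en%:Z); first ring.
    rewrite -HQ -HE; ring.
  have E2 : (a%:R * n%:R + d%:~R : rat) =
     en%:R * ((b1.+1 * (b1.+1 - 1))%N%:R * m%:R + (b1.+1%:Z - 1)%:~R).
    rewrite !pmulrn -!intrM -!intrD -!intrM; congr (_ %:~R).
    rewrite /n subn1 /= -addn1 !PoszD !PoszM.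
    transitivity (en%:Z * m%:Z * (qn%:Z * a%:Z) + (a%:Z * dn%:Z + d)); first ring.
    rewrite -HQ -HE; ring.
  rewrite E1 E2 invfM mulrACA mulfV ?mul1r //.
  by rewrite pnatr_eq0 -lt0n.
have Rinc : forall q : rat,
    Rset (b1.+1 * (b1.+1 - 1))%N b1.+1%:Z (b1.+1 * (b1.+1 - 1))%N (b1.+1%:Z - 1) q ->
    Rset a b a d q.
  move=> q [[m [m1 ->]] [qpos q1]].
  split => //; exists (en * qn * m + dn)%N; split; last by rewrite Hid.
  by rewrite addn_gt0 dn1 orbT.
exists (b1.+1 * (b1.+1 - 1))%N, b1.+1; split => //.
- move=> k [s [us ss ps cl]]; exists s; split => // x y xs ys xy.
  have [x1 [y1 H]] := cl x y xs ys xy; split => //; split => //.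
  by case: H => H; [left|right]; apply: Rinc.
- exists (en * qn)%N, dn; split => //; first by rewrite muln_gt0 en1.
  move=> m _; exact: Hid.
Qed.
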